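(* Let $(\Gamma,\rho)$ be a weakly connected voltage graph with finite voltage group $G$, with local groups $\{G_i\}$ and directed local groups $\{G_i^*\}$. Then: (1) If $\Gamma$ is strongly connected, then $G_i^*=G_i$ for every vertex $v_i$. (2) If vertices $v_i,v_j$ are mutually reachable, then for any walk $w_{ij}$ from $v_i$ to $v_j$, $G_j^*=f(w_{ij})^{-1}\cdot G_i^*\cdot f(w_{ij})$.
   Context: $\Gamma=(V,E)$ simple digraph, $e_{ij}$ the edge $v_i\to v_j$, $\rho:E\to G$. Semi-walk $w=v_{i_1}a_1\dots a_{n-1}v_{i_n}$ with each $a_j\in\{e_{i_ji_{j+1}},e_{i_{j+1}i_j}\}$; walk if all $a_j=e_{i_ji_{j+1}}$; closed if $v_{i_1}=v_{i_n}$; path: walk with distinct vertices. Weakly connected: any two vertices joined by a semi-walk; strongly connected: every ordered pair of distinct vertices joined by a path; $v_i,v_j$ mutually reachable: there is a path from $v_i$ to $v_j$ and one from $v_j$ to $v_i$. Net voltage $f(w)=\bar\rho(a_1)\cdots\bar\rho(a_{n-1})$ with $\bar\rho(a_j)=\rho(a_j)$ for forward and $\rho(a_j)^{-1}$ for backward edges ($f=\mathbf 1$ on a single vertex). $G_i=\{f(w): w$ closed semi-walk at $v_i\}$, $G_i^*=\{f(w): w$ closed walk at $v_i\}$. *)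

(* Defs.v *)
From mathcomp Require Import all_boot all_fingroup.
Set Implicit Arguments. Unset Strict Implicit. Unset Printing Implicit Defensive.

Local Open Scope group_scope.

(* A simple digraph on a finite vertex type T is an irreflexive relation
   e : rel T ; e x y means the edge x -> y exists.  A voltage assignment is
   rho : T -> T -> gT, only its values on edges matter. *)

(* A semi-walk from x is encoded by the list of its steps (y, b): the next
   vertex y and b = true if the edge is traversed forward (x -> y), b = false
   if traversed backward (the edge y -> x). *)
Definition step_ok (T : finType) (e : rel T) (x : T) (s : T * bool) : bool :=
  if s.2 then e x s.1 else e s.1 x.

Fixpoint semiwalk (T : finType) (e : rel T) (x : T) (p : seq (T * bool)) : bool :=
  match p with
  | [::] => true
  | s :: p' => step_ok e x s && semiwalk e s.1 p'
  end.

Definition sw_end (T : finType) (x : T) (p : seq (T * bool)) : T :=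
  last x (map fst p).

Definition is_walk (T : finType) (e : rel T) (x : T) (p : seq (T * bool)) : bool :=
  semiwalk e x p && all snd p.

Definition is_path (T : finType) (e : rel T) (x : T) (p : seq (T * bool)) : bool :=
  is_walk e x p && uniq (x :: map fst p).

Fixpoint net_voltage (T : finType) (gT : finGroupType) (rho : T -> T -> gT)
    (x : T) (p : seq (T * bool)) : gT :=
  match p with
  | [::] => 1
  | s :: p' => (if s.2 then rho x s.1 else (rho s.1 x)^-1) * net_voltage rho s.1 p'
  end.

Definition weakly_connected (T : finType) (e : rel T) : Prop :=
  forall x y : T, exists p, semiwalk e x p /\ sw_end x p = y.

Definition strongly_connected (T : finType) (e : rel T) : Prop :=
  forall x y : T, x <> y -> exists p, is_path e x p /\ sw_end x p = y.

Definition mutually_reachable (T : finType) (e : rel T) (x y : T) : Prop :=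
  (exists p, is_path e x p /\ sw_end x p = y) /\
  (exists p, is_path e y p /\ sw_end y p = x).

Definition local_group (T : finType) (gT : finGroupType) (e : rel T)
    (rho : T -> T -> gT) (x : T) : gT -> Prop :=
  fun g => exists p, [/\ semiwalk e x p, sw_end x p = x & net_voltage rho x p = g].

Definition dlocal_group (T : finType) (gT : finGroupType) (e : rel T)
    (rho : T -> T -> gT) (x : T) : gT -> Prop :=
  fun g => exists p, [/\ is_walk e x p, sw_end x p = x & net_voltage rho x p = g].

(* Main.v *)
Require Import Defs.
From mathcomp Require Import all_boot all_fingroup.
Local Open Scope group_scope.
Set Implicit Arguments. Unset Strict Implicit.

Section W.
Variables (T : finType) (gT : finGroupType) (e : rel T) (rho : T -> T -> gT).

Lemma semiwalk_cat (x : T) p q :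
  semiwalk e x (p ++ q) = semiwalk e x p && semiwalk e (sw_end x p) q.
Proof.
elim: p x => [|s p IH] x //=.
by rewrite IH andbA.
Qed.

Lemma sw_end_cat (x : T) (p q : seq (T * bool)) : sw_end x (p ++ q) = sw_end (sw_end x p) q.
Proof. by rewrite /sw_end map_cat last_cat. Qed.

Lemma nv_cat (x : T) p q :
  net_voltage rho x (p ++ q) = net_voltage rho x p * net_voltage rho (sw_end x p) q.
Proof.
elim: p x => [|s p IH] x /=; first by rewrite mul1g.
by rewrite IH mulgA.
Qed.

Definition W (x y : T) (g : gT) := exists p, [/\ is_walk e x p, sw_end x p = y & net_voltage rho x p = g].

Lemma W_nil x : W x x 1.
Proof. by exists [::]. Qed.

Lemma W_cat x y z g h : W x y g -> W y z h -> W x z (g * h).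
Proof.
move=> [p [wp ep vp]] [q [wq eq vq]]; exists (p ++ q); split.
- move: wp wq; rewrite /is_walk semiwalk_cat all_cat ep.
  by case/andP=> -> -> /andP [-> ->].
- by rewrite sw_end_cat ep.
- by rewrite nv_cat ep vp vq.
Qed.

Lemma W_pow x g n : W x x g -> W x x (g ^+ n).
Proof.
move=> H; elim: n => [|n IH]; first by rewrite expg0; apply: W_nil.
by rewrite expgS; apply: W_cat H IH.
Qed.

Lemma W_inv x y g h : W x y g -> W y x h -> W y x g^-1.
Proof.
move=> Hg Hh.
have Hd := W_cat Hg Hh.
have := W_cat Hh (W_pow #[g * h].-1 Hd).
suff -> : h * (g * h) ^+ #[g * h].-1 = g^-1 by [].
have Hn : (g * h) ^+ #[g * h].-1 = (g * h)^-1.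
  apply: (mulgI (g * h)); rewrite mulgV -expgS prednK ?order_gt0 //.
  exact: expg_order.
by rewrite Hn invMg mulgA mulgV mul1g.
Qed.

Lemma W_edge x y : e x y -> W x y (rho x y).
Proof. by move=> E; exists [:: (y, true)]; split => //=; [by rewrite /is_walk /= /step_ok /= E | by rewrite mulg1]. Qed.

Lemma W_path x p : is_path e x p -> W x (sw_end x p) (net_voltage rho x p).
Proof. by case/andP=> H _; exists p. Qed.

End W.

Theorem corollary2 (T : finType) (gT : finGroupType) (e : rel T)
    (rho : T -> T -> gT) :
  irreflexive e ->
  weakly_connected e ->
  (strongly_connected e ->
     forall (x : T) (g : gT), dlocal_group e rho x g <-> local_group e rho x g)
  /\
  (forall x y : T, mutually_reachable e x y ->
     forall p, is_walk e x p -> sw_end x p = y ->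
     forall g : gT, dlocal_group e rho y g <->
       exists2 h, dlocal_group e rho x h &
         g = (net_voltage rho x p)^-1 * h * net_voltage rho x p).
Proof.
move=> irr _; split.
  move=> sc x g; split.
    by move=> [p [/andP [H _] E V]]; exists p.
  move=> [p [sp E V]].
  suff : W e rho x (sw_end x p) (net_voltage rho x p) by rewrite E V.
  elim: p x sp {E V} => [|[y b] p IH] x /=; first by move=> _; apply: W_nil.
  rewrite /step_ok /= => /andP [st sp].
  have -> : sw_end x ((y, b) :: p) = sw_end y p by [].
  apply: W_cat (IH _ sp).
  case: b st => st; first exact: W_edge.
  have nxy : x <> y by move=> exy; rewrite exy irr in st.
  have [q [pq eq]] := sc x y nxy.
  have := W_path rho pq; rewrite eq => Hq.
  exact: W_inv (W_edge rho st) Hq.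
move=> x y [_ [q [pq eq]]] p wp ep g.
have Hp : W e rho x y (net_voltage rho x p) by exists p.
have := W_path rho pq; rewrite eq => Hq.
have Hr := W_inv Hp Hq.
split.
  move=> [c [wc ec vc]].
  have Hc : W e rho y y g by exists c.
  exists (net_voltage rho x p * g * (net_voltage rho x p)^-1).
    have [c' [? ? ?]] := W_cat (W_cat Hp Hc) Hr; by exists c'.
  by rewrite !mulgA mulVg mul1g mulgKV.
move=> [h [c [wc ec vc]] ->].
have Hc : W e rho x x h by exists c.
have [c' [? ? ?]] := W_cat (W_cat Hr Hc) Hp; by exists c'.
Qed.
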